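(* Let $\omega:\Gamma^2\to\Gamma$ be a surjective group morphism. Then $G(\mathrm{ad}(h)\circ\omega)\cong G(\omega)$ for all $h\in\Gamma$.
   Context: $\mathrm{ad}(h)(g)=hgh^{-1}$. $\{0,1\}^*$ denotes the finite words over $\{0,1\}$; $\mathfrak C=\{0,1\}^{\mathbb N}$. A finite complete prefix code is a finite set $\{t_1,\dots,t_n\}\subset\{0,1\}^*$ such that every $x\in\mathfrak C$ has exactly one $t_i$ as prefix. Thompson's group $V$ is the group of homeomorphisms $v$ of $\mathfrak C$ for which there exist finite complete prefix codes $\{t_i\},\{s_i\}$ and a permutation $\sigma$ with $v(t_iw)=s_{\sigma(i)}w$. For a group morphism $\omega:\Gamma^2\to\Gamma$, $K(\omega)$ is the group of maps $a:\{0,1\}^*\to\Gamma$ (pointwise product) with $a(u)=\omega(a(u0),a(u1))$ for all $u$; $V$ acts on it by $\pi(v)(a)(s_{\sigma(i)}u)=a(t_iu)$ for all $i$, $u$ (determining $\pi(v)(a)\in K(\omega)$ uniquely); $G(\omega):=K(\omega)\rtimes V$ with $vav^{-1}=\pi(v)(a)$. *)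

(* Defs.v *)
From HB Require Import structures.
From mathcomp Require Import all_boot.
From mathcomp Require Import monoid.
From Stdlib Require Import ClassicalEpsilon.

Set Implicit Arguments.
Unset Strict Implicit.
Unset Printing Implicit Defensive.

Local Open Scope group_scope.

Definition cantor := nat -> bool.
Definition word := seq bool.

Definition hasPrefix (t : word) (x : cantor) : Prop :=
  forall i, (i < size t)%N -> x i = nth false t i.

Definition catw (t : word) (w : cantor) : cantor :=
  fun n => if (n < size t)%N then nth false t n else w (n - size t)%N.

(* {t_0,...,t_{n-1}} is a finite complete prefix code: every x has exactly
   one t_i as prefix (in particular the t_i are pairwise distinct). *)
Definition complete_prefix_code (n : nat) (t : 'I_n -> word) : Prop :=
  forall x : cantor, exists! i : 'I_n, hasPrefix (t i) x.

Definition cantor_continuous (f : cantor -> cantor) : Prop :=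
  forall (x : cantor) (N : nat), exists M : nat, forall y : cantor,
    (forall i, (i < M)%N -> y i = x i) ->
    forall j, (j < N)%N -> f y j = f x j.

Definition homeomorphism (f : cantor -> cantor) : Prop :=
  exists g : cantor -> cantor,
    [/\ cancel f g, cancel g f, cantor_continuous f & cantor_continuous g].

Definition code_rep (n : nat) (t s : 'I_n -> word) (sigma : 'I_n -> 'I_n)
    (v : cantor -> cantor) : Prop :=
  [/\ complete_prefix_code t, complete_prefix_code s, injective sigma &
      forall (i : 'I_n) (w : cantor), v (catw (t i) w) = catw (s (sigma i)) w].

Definition inV (v : cantor -> cantor) : Prop :=
  homeomorphism v /\
  exists (n : nat) (t s : 'I_n -> word) (sigma : 'I_n -> 'I_n), code_rep t s sigma v.

Section K.
Variable Gamma : groupType.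

Definition group_morph2 (omega : Gamma -> Gamma -> Gamma) : Prop :=
  forall x1 y1 x2 y2 : Gamma,
    omega (x1 * x2) (y1 * y2) = omega x1 y1 * omega x2 y2.

Definition surjective2 (omega : Gamma -> Gamma -> Gamma) : Prop :=
  forall g : Gamma, exists x y : Gamma, omega x y = g.

Definition ad_comp (h : Gamma) (omega : Gamma -> Gamma -> Gamma) :=
  fun x y => h * omega x y * h^-1.

Definition inK (omega : Gamma -> Gamma -> Gamma) (a : word -> Gamma) : Prop :=
  forall u : word, a u = omega (a (rcons u false)) (a (rcons u true)).

Definition Kmul (a b : word -> Gamma) : word -> Gamma := fun u => a u * b u.

Definition piRel (omega : Gamma -> Gamma -> Gamma) (v : cantor -> cantor)
    (a b : word -> Gamma) : Prop :=
  inK omega b /\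
  exists (n : nat) (t s : 'I_n -> word) (sigma : 'I_n -> 'I_n),
    code_rep t s sigma v /\
    forall (i : 'I_n) (u : word), b (s (sigma i) ++ u) = a (t i ++ u).

(* the (uniquely determined) element pi(v)(a) *)
Definition pi (omega : Gamma -> Gamma -> Gamma) (v : cantor -> cantor)
    (a : word -> Gamma) : word -> Gamma :=
  epsilon (inhabits a) (piRel omega v a).

(* G(omega) = K(omega) x| V : elements are pairs (a, v) *)
Definition Gcarrier := ((word -> Gamma) * (cantor -> cantor))%type.

Definition inG (omega : Gamma -> Gamma -> Gamma) (x : Gcarrier) : Prop :=
  inK omega x.1 /\ inV x.2.

Definition Gmul (omega : Gamma -> Gamma -> Gamma) (x y : Gcarrier) : Gcarrier :=
  (Kmul x.1 (pi omega x.2 y.1), x.2 \o y.2).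

Definition G_isomorphic (omega1 omega2 : Gamma -> Gamma -> Gamma) : Prop :=
  exists f : Gcarrier -> Gcarrier,
    [/\ forall x, inG omega1 x -> inG omega2 (f x),
        forall y, inG omega2 y -> exists! x, inG omega1 x /\ f x = y &
        forall x y, inG omega1 x -> inG omega1 y ->
          f (Gmul omega1 x y) = Gmul omega2 (f x) (f y)].
End K.

(* Main.v *)
Require Import Defs.
From HB Require Import structures.
From mathcomp Require Import all_boot.
From mathcomp Require Import monoid zify.
From Stdlib Require Import ClassicalEpsilon FunctionalExtensionality.

Set Implicit Arguments.
Unset Strict Implicit.
Unset Printing Implicit Defensive.

Lemma catw_cat p q x : catw (p ++ q) x = catw p (catw q x).
Proof.
apply: functional_extensionality => n; rewrite /catw size_cat nth_cat.
case: (ltnP n (size p)) => Hn.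
  by rewrite (leq_trans Hn) ?leq_addr.
have -> : (n - size p < size q) = (n < size p + size q) by lia.
case: ifP => // _; by rewrite subnDA.
Qed.

Lemma catw_inj p q : (forall x, catw p x = catw q x) -> p = q.
Proof.
move=> H.
wlog le : p q H / size p <= size q.
  move=> W; case: (leqP (size p) (size q)) => h; first exact: W.
  by symmetry; apply: W; [move=> x; rewrite H | apply: ltnW].
have Hs : size p = size q.
  apply/eqP; rewrite eqn_leq le /=; rewrite leqNgt; apply/negP => lt.
  have := H (fun _ => ~~ nth false q (size p)).
  move/(congr1 (fun f => f (size p))); rewrite /catw ltnn lt.
  by case: (nth false q (size p)).
apply: (eq_from_nth (x0 := false)) => // i Hi.
have := H (fun _ => false); move/(congr1 (fun f => f i)).
by rewrite /catw Hi -Hs Hi.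
Qed.

Lemma hasPrefix_catw p x : hasPrefix p (catw p x).
Proof. by move=> i Hi; rewrite /catw Hi. Qed.

Lemma hasPrefix_eq p y : hasPrefix p y -> y = catw p (fun n => y (n + size p)).
Proof.
move=> H; apply: functional_extensionality => n; rewrite /catw.
case: ifP => Hn; first by rewrite H.
congr y; lia.
Qed.

Lemma long_ext n (s : 'I_n -> word) : complete_prefix_code s ->
  exists N, forall q, N <= size q -> exists k u, q = s k ++ u.
Proof.
move=> Hc.
have [N HN] : exists N, forall k, size (s k) <= N.
  by exists (\max_(k < n) size (s k)) => k; exact: (@leq_bigmax _ (fun k => size (s k)) k).
exists N => q Hq.
have [k [Hk _]] := Hc (catw q (fun _ => false)).
have Hsk : size (s k) <= size q by exact: leq_trans (HN k) Hq.
exists k, (drop (size (s k)) q).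
suff E : s k = take (size (s k)) q by rewrite {1}E cat_take_drop.
apply: (eq_from_nth (x0 := false)); first by rewrite size_take_min; lia.
move=> i Hi; rewrite nth_take //.
have := Hk i Hi; rewrite /catw.
by rewrite (leq_trans Hi Hsk) => ->.
Qed.

Section Generic.
Variable Gamma : groupType.
Local Open Scope group_scope.
Implicit Types (W : Gamma -> Gamma -> Gamma) (a b : word -> Gamma) (v w : cantor -> cantor).

Definition Good W v a b := inK W b /\
  forall p q, (forall x, v (catw p x) = catw q x) -> b q = a p.
Definition Fwd v := exists N, forall p, N <= size p ->
  exists m, forall x, v (catw p x) = catw m x.
Definition Cov v := exists N, forall q, N <= size q ->
  exists p, forall x, v (catw p x) = catw q x.

Lemma DI W a b p q N : inK W a -> inK W b ->
  (forall r, N <= size r -> b (q ++ r) = a (p ++ r)) -> b q = a p.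
Proof.
move=> Ka Kb H.
suff H2 : forall k r, N <= k + size r -> b (q ++ r) = a (p ++ r).
  by have := H2 N [::] (leq_addr _ _); rewrite !cats0.
elim=> [|k IH] r Hr; first exact: H.
rewrite Ka Kb !rcons_cat !IH // size_rcons; lia.
Qed.

Lemma code_Fwd n (t s : 'I_n -> word) sigma v : code_rep t s sigma v -> Fwd v.
Proof.
case=> Ht Hs Hsig Hv; have [N HN] := long_ext Ht.
exists N => p Hp; have [i [u ->]] := HN p Hp.
by exists (s (sigma i) ++ u) => x; rewrite !catw_cat Hv.
Qed.

Lemma code_Cov n (t s : 'I_n -> word) sigma v : code_rep t s sigma v -> Cov v.
Proof.
case=> Ht Hs Hsig Hv; have [N HN] := long_ext Hs.
have [sig' K1 K2] := injF_bij Hsig.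
exists N => q Hq; have [k [u ->]] := HN q Hq.
by exists (t (sig' k) ++ u) => x; rewrite !catw_cat Hv K2.
Qed.

Lemma inV_Fwd v : inV v -> Fwd v.
Proof. by case=> _ [n [t [s [sig H]]]]; exact: code_Fwd H. Qed.
Lemma inV_Cov v : inV v -> Cov v.
Proof. by case=> _ [n [t [s [sig H]]]]; exact: code_Cov H. Qed.
Lemma inV_inj v : inV v -> injective v.
Proof. by case=> [[g [K _ _ _]] _]; exact: can_inj K. Qed.

Lemma piRel_Good W v a b : inK W a -> Defs.piRel W v a b -> Good W v a b.
Proof.
move=> Ka [Kb [n [t [s [sig [[Ht Hs Hsig Hv] Hb]]]]]]; split=> // p q Hpq.
have [N HN] := long_ext Ht.
apply: (DI (N := N)) => // r Hr.
have [i [u E]] := HN (p ++ r) ltac:(rewrite size_cat; lia).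
have -> : q ++ r = s (sig i) ++ u.
  apply: catw_inj => x.
  by rewrite catw_cat -Hpq -catw_cat E catw_cat Hv catw_cat.
by rewrite Hb E.
Qed.

Lemma Good_unique W v a b b' : Cov v -> Good W v a b -> Good W v a b' -> b = b'.
Proof.
move=> [N HN] [Kb Hb] [Kb' Hb']; apply: functional_extensionality => q.
apply: (DI (N := N)) => // r Hr.
have [p Hp] := HN (q ++ r) ltac:(rewrite size_cat; lia).
by rewrite (Hb _ _ Hp) (Hb' _ _ Hp).
Qed.

Fixpoint Btree W (base : word -> Gamma) (m : nat) (q : word) : Gamma :=
  match m with
  | 0 => base q
  | m'.+1 => W (Btree W base m' (rcons q false)) (Btree W base m' (rcons q true))
  end.

Lemma Good_exists W v a : inK W a -> injective v -> Cov v -> exists b, Good W v a b.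
Proof.
move=> Ka Iv [N HN].
pose P q p := forall x, v (catw p x) = catw q x.
pose pq q := epsilon (inhabits [::]) (P q).
have Puniq : forall q p1 p2, P q p1 -> P q p2 -> p1 = p2.
  move=> q p1 p2 H1 H2; apply: catw_inj => x; apply: Iv; by rewrite H1 H2.
have Pspec : forall q, N <= size q -> P q (pq q).
  move=> q Hq; apply: epsilon_spec; exact: HN.
have Pext : forall q p r, P q p -> P (q ++ r) (p ++ r).
  by move=> q p r H x; rewrite !catw_cat H.
pose base q := a (pq q).
have Hbase : forall q p, N <= size q -> P q p -> base q = a p.
  by move=> q p Hq Hp; rewrite /base (Puniq _ _ _ (Pspec _ Hq) Hp).
pose b q := Btree W base (N - size q) q.
have Kb : inK W b.
  move=> q; rewrite /b; case: (leqP N (size q)) => Hq.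
    have E : forall z, N - size (rcons q z) = 0 by move=> z; rewrite size_rcons; lia.
    rewrite !E; have -> : N - size q = 0 by lia.
    rewrite /= (Hbase q (pq q) Hq (Pspec _ Hq)).
    have Hz : forall z, base (rcons q z) = a (rcons (pq q) z).
      move=> z; apply: Hbase; first by rewrite size_rcons; lia.
      by rewrite -!cats1; apply: Pext; apply: Pspec.
    by rewrite !Hz -Ka.
  have -> : N - size q = (N - size (rcons q false)).+1 by rewrite size_rcons; lia.
  have -> : N - size (rcons q true) = N - size (rcons q false) by rewrite !size_rcons.
  by [].
exists b; split=> // p q Hpq; apply: (DI (N := N)) => //.
move=> r Hr.
have Hqr : N <= size (q ++ r) by rewrite size_cat; lia.
rewrite /b; have -> : N - size (q ++ r) = 0 by lia.
by rewrite /= (Hbase _ (p ++ r) Hqr (Pext _ _ _ Hpq)).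
Qed.

Lemma Good_piRel W v a b : inV v -> Good W v a b -> Defs.piRel W v a b.
Proof.
move=> [_ [n [t [s [sig H]]]]] [Kb Hb]; split=> //.
exists n, t, s, sig; split=> // i u; apply: Hb => x.
by case: H => _ _ _ Hv; rewrite !catw_cat Hv.
Qed.

Lemma pi_Good W v a : inK W a -> inV v -> Good W v a (Defs.pi W v a).
Proof.
move=> Ka Vv; apply: piRel_Good => //; apply: epsilon_spec.
have [b Hb] := Good_exists Ka (inV_inj Vv) (inV_Cov Vv).
by exists b; apply: Good_piRel.
Qed.

Lemma Good_comp W v w a b e : Fwd w -> inK W a ->
  Good W w a b -> Good W v b e -> Good W (v \o w) a e.
Proof.
move=> [N HN] Ka [Kb Hb] [Ke He]; split=> // p q Hpq.
apply: (DI (N := N)) => // r Hr.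
have [m Hm] := HN (p ++ r) ltac:(rewrite size_cat; lia).
rewrite -(Hb _ _ Hm); apply: He => x.
by rewrite -Hm catw_cat; have := Hpq (catw r x); rewrite /= => ->; rewrite catw_cat.
Qed.

End Generic.

Lemma Fwd_comp v w : Fwd v -> Fwd w -> Fwd (v \o w).
Proof.
move=> [Nv Hv] [Nw Hw]; exists (Nw + Nv) => p Hp.
have [m1 H1] := Hw (take Nw p) ltac:(rewrite size_take_min; lia).
have [m2 H2] := Hv (m1 ++ drop Nw p) ltac:(rewrite size_cat size_drop; lia).
exists m2 => x /=.
by rewrite -{1}(cat_take_drop Nw p) catw_cat H1 -catw_cat H2.
Qed.

Lemma cont_comp f g : cantor_continuous f -> cantor_continuous g ->
  cantor_continuous (f \o g).
Proof.
move=> Cf Cg x N; have [M1 H1] := Cf (g x) N; have [M2 H2] := Cg x M1.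
by exists M2 => y Hy j Hj /=; apply: H1 => // i Hi; apply: H2.
Qed.

Lemma hasPrefix_mkseq L x : hasPrefix (mkseq x L) x.
Proof. by move=> i; rewrite size_mkseq => Hi; rewrite nth_mkseq. Qed.

Lemma hasPrefix_mkseq_eq L p x : size p = L -> hasPrefix p x -> p = mkseq x L.
Proof.
move=> Hs Hp; apply: (eq_from_nth (x0 := false)); first by rewrite size_mkseq.
by move=> i Hi; rewrite nth_mkseq -?Hs // Hp.
Qed.

Lemma inV_comp v w : inV v -> inV w -> inV (v \o w).
Proof.
move=> Vv Vw.
have [L HL] := Fwd_comp (inV_Fwd Vv) (inV_Fwd Vw).
case: Vv => [[gv [Kv1 Kv2 Cv Cgv]] _]; case: Vw => [[gw [Kw1 Kw2 Cw Cgw]] _].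
pose g := gw \o gv.
have K1 : cancel (v \o w) g by move=> x; rewrite /g /= Kv1 Kw1.
have K2 : cancel g (v \o w) by move=> x; rewrite /g /= Kw2 Kv2.
split; first by exists g; split=> //; [exact: cont_comp | exact: cont_comp].
pose T := L.-tuple bool.
pose n := #|{: T}|.
pose t (i : 'I_n) : word := val (enum_val i).
pose mk (x : cantor) : T := Tuple (introT eqP (size_mkseq x L)).
have St : forall i, size (t i) = L by move=> i; rewrite /t size_tuple.
have Ct : complete_prefix_code t.
  move=> x; exists (enum_rank (mk x)); split.
    by rewrite /t enum_rankK /=; exact: hasPrefix_mkseq.
  move=> j Hj; have E := hasPrefix_mkseq_eq (St j) Hj.
  have E2 : enum_val j = mk x by apply: val_inj; rewrite /= -E.
  by rewrite -E2 enum_valK.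
pose s (i : 'I_n) : word :=
  epsilon (inhabits [::]) (fun m => forall x, (v \o w) (catw (t i) x) = catw m x).
have Hs : forall i x, (v \o w) (catw (t i) x) = catw (s i) x.
  move=> i; apply: (epsilon_spec (inhabits [::]) (fun m => forall x, (v \o w) (catw (t i) x) = catw m x)).
  by apply: HL; rewrite St.
have Tr : forall j y, hasPrefix (s j) y <-> hasPrefix (t j) (g y).
  move=> j y; split=> H.
    rewrite (hasPrefix_eq H) -Hs K1; exact: hasPrefix_catw.
  by rewrite -[y]K2 (hasPrefix_eq H) Hs; exact: hasPrefix_catw.
have Cs : complete_prefix_code s.
  move=> y; have [i [Hi U]] := Ct (g y); exists i; split; first by apply/Tr.
  by move=> j /Tr; apply: U.
exists n, t, s, id; split=> //.
Qed.

Fixpoint ctree (Gamma : Type) (one : Gamma) (pick : Gamma -> Gamma * Gamma) (r : word) : Gamma :=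
  match r with
  | [::] => one
  | z :: r' => let pr := pick (ctree one pick r') in if z then pr.2 else pr.1
  end.

Section Main.
Variable Gamma : groupType.
Local Open Scope group_scope.
Variable omega : Gamma -> Gamma -> Gamma.
Hypothesis Hm : group_morph2 omega.
Hypothesis Hsurj : surjective2 omega.
Variable h : Gamma.

Let om1 := ad_comp h omega.
Let om3 := fun x y : Gamma => h * omega x y.

Lemma om11 : omega 1 1 = 1.
Proof.
have := Hm 1 1 1 1; rewrite mul1g => E.
by apply: (mulgI (omega 1 1)); rewrite mulg1 -E.
Qed.

Lemma omV x y : omega x^-1 y^-1 = (omega x y)^-1.
Proof.
symmetry; apply: mulg1_eq; by rewrite -Hm !mulgV om11.
Qed.

Lemma mixK (x y z : word -> Gamma) : inK om3 x -> inK om1 y -> inK om3 z ->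
  inK omega (fun u => (x u)^-1 * y u * z u).
Proof.
move=> Kx Ky Kz u; rewrite Kx Ky Kz /om3 /om1 /ad_comp !Hm !omV invgM !mulgA.
by rewrite !mulgVK.
Qed.

Lemma mixK2 (x y z : word -> Gamma) : inK om3 x -> inK omega y -> inK om3 z ->
  inK om1 (fun u => x u * y u * (z u)^-1).
Proof.
move=> Kx Ky Kz u; rewrite Kx Ky Kz /om3 /om1 /ad_comp !Hm !omV invgM !mulgA.
by [].
Qed.

Lemma c_exists : exists c, inK om3 c.
Proof.
have Hp : forall g, exists pr : Gamma * Gamma, om3 pr.1 pr.2 = g.
  move=> g; have [x [y E]] := Hsurj (h^-1 * g).
  by exists (x, y); rewrite /om3 /= E mulVKg.
pose pick g := epsilon (inhabits (1, 1)) (fun pr : Gamma * Gamma => om3 pr.1 pr.2 = g).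
have Pk : forall g, om3 (pick g).1 (pick g).2 = g.
  by move=> g; apply: (epsilon_spec (inhabits (1, 1)) (fun pr : Gamma * Gamma => om3 pr.1 pr.2 = g)).
exists (fun u => ctree 1 pick (rev u)) => u.
by rewrite !rev_rcons /= Pk.
Qed.

Lemma main_iso : G_isomorphic om1 omega.
Proof.
have [c Kc] := c_exists.
pose d v := Defs.pi om3 v c.
have Kd : forall v, inV v -> inK om3 (d v) by move=> v Vv; case: (pi_Good Kc Vv).
pose f (x : Gcarrier Gamma) : Gcarrier Gamma := (fun u => (c u)^-1 * x.1 u * d x.2 u, x.2).
exists f; split.
- move=> [a v] [Ka Vv]; split=> //=; exact: mixK Kc Ka (Kd v Vv).
- move=> [a v] [Ka Vv].
  exists (fun u => c u * a u * (d v u)^-1, v); split.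
    split; first by split=> //=; exact: mixK2 Kc Ka (Kd v Vv).
    rewrite /f /=; congr pair; apply: functional_extensionality => u.
    by rewrite !mulgA mulVg mul1g mulgVK.
  move=> [a' v'] [_ E]; rewrite /f /= in E; case: E => E1 E2; subst v'.
  congr pair; apply: functional_extensionality => u; rewrite -E1.
  by rewrite !mulgA mulgV mul1g mulgK.
- move=> [a v] [b w] [Ka Vv] [Kb Vw].
  rewrite /Gmul /f /Kmul /=; congr pair; apply: functional_extensionality => q.
  have Vvw := inV_comp Vv Vw.
  have Hvw : Defs.pi om3 v (d w) = d (v \o w).
    apply: (Good_unique (inV_Cov Vvw)) (pi_Good Kc Vvw).
    exact: Good_comp (inV_Fwd Vw) Kc (pi_Good Kc Vw) (pi_Good (Kd w Vw) Vv).
  have [Kp1 Hp1] := pi_Good Kb Vv.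
  have [Kdv Hdv] := pi_Good Kc Vv.
  have [_ Hdw] := pi_Good (Kd w Vw) Vv.
  have Kfb : inK omega (fun u => (c u)^-1 * b u * d w u) by apply: mixK => //; exact: Kd.
  have E : Defs.pi omega v (fun u => (c u)^-1 * b u * d w u)
         = fun u => (d v u)^-1 * Defs.pi om1 v b u * d (v \o w) u.
    symmetry; apply: (Good_unique (inV_Cov Vv)) (pi_Good Kfb Vv); split.
      apply: mixK => //; exact: Kd.
    move=> p u Hpu; rewrite -Hvw (Hdw _ _ Hpu) (Hp1 _ _ Hpu).
    by rewrite /d (Hdv _ _ Hpu).
  by rewrite E !mulgA mulgK.
Qed.

End Main.

Theorem mainTheorem15 (Gamma : groupType) (omega : Gamma -> Gamma -> Gamma) :
  group_morph2 omega -> surjective2 omega ->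
  forall h : Gamma, G_isomorphic (ad_comp h omega) omega.
Proof. move=> Hm Hs h; exact: main_iso. Qed.
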